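(* Let $M\ge2$ and $N\ge2$ be integers. The $N^M$ standard oracle operators $U_f$, where $f$ ranges over all functions $\mathbb{Z}_M\to\mathbb{Z}_N$, are not unambiguously distinguishable.
   Context: Let $\mathcal{H}_M,\mathcal{H}_N$ be Hilbert spaces with orthonormal computational bases $\{|x\rangle\}_{x\in\mathbb{Z}_M}$, $\{|y\rangle\}_{y\in\mathbb{Z}_N}$. For $f:\mathbb{Z}_M\to\mathbb{Z}_N$ the standard oracle operator is the unitary $U_f$ on $\mathcal{H}_M\otimes\mathcal{H}_N$ with $U_f|x\rangle\otimes|y\rangle=|x\rangle\otimes|y\oplus f(x)\rangle$, $\oplus$ being addition mod $N$. A finite list of unitary operators $W_1,\ldots,W_K$ on a finite-dimensional Hilbert space $\mathcal{H}$ is called unambiguously distinguishable if there exist a finite-dimensional ancilla space $\mathcal{H}_A$ and a unit vector $|\psi\rangle\in\mathcal{H}\otimes\mathcal{H}_A$ such that the vectors $(W_j\otimes\mathbb{1}_A)|\psi\rangle$ are linearly independent. *)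

(* Defs.v *)
(* Scalars: an arbitrary numClosedFieldType C (e.g. complex R
   for a real-closed/real field R, or algC); finite-dimensional Hilbert spaces
   are C^T for a finite basis type T. *)
From HB Require Import structures.
From mathcomp Require Import all_boot all_order all_algebra.
Set Implicit Arguments. Unset Strict Implicit. Unset Printing Implicit Defensive.
Import Order.TTheory GRing.Theory Num.Theory.
Local Open Scope ring_scope.

Section Defs.
Variable C : numClosedFieldType.

Definition oplus (N : nat) (y z : 'I_N) : 'I_N :=
  Ordinal (ltn_pmod (y + z) (leq_ltn_trans (leq0n y) (ltn_ord y))).

Definition lin_indep (I T : finType) (v : I -> T -> C) : Prop :=
  forall c : I -> C, (forall t, \sum_(i : I) c i * v i t = 0) -> forall i, c i = 0.

Definition unit_vec (T : finType) (psi : T -> C) : Prop :=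
  \sum_(t : T) psi t * (psi t)^* = 1.

(* (W (x) 1_A) psi, W an operator on C^T given by its matrix W t s = <t|W|s> *)
Definition apply_tensor_id (T A : finType) (W : T -> T -> C) (psi : T * A -> C)
  : T * A -> C :=
  fun p => \sum_(s : T) W p.1 s * psi (s, p.2).

Definition unamb_dist (I T : finType) (W : I -> T -> T -> C) : Prop :=
  exists d : nat, exists psi : T * 'I_d -> C,
    unit_vec psi /\ lin_indep (fun i => apply_tensor_id (W i) psi).

(* standard oracle U_f |x>|y> = |x>|y (+) f(x)>, as a matrix on basis Z_M x Z_N *)
Definition oracle (M N : nat) (f : {ffun 'I_M -> 'I_N})
  : 'I_M * 'I_N -> 'I_M * 'I_N -> C :=
  fun p q => if (p.1 == q.1) && (p.2 == oplus q.2 (f q.1)) then 1 else 0.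

End Defs.

(* Main.v *)
Require Import Defs.
From HB Require Import structures.
From mathcomp Require Import all_boot all_order all_algebra.
Import Order.TTheory GRing.Theory Num.Theory.
Local Open Scope ring_scope.

Theorem theorem4 (C : numClosedFieldType) (M N : nat) :
  (2 <= M)%N -> (2 <= N)%N ->
  ~ unamb_dist (fun f : {ffun 'I_M -> 'I_N} => oracle C f).
Proof.
move=> hM hN [d [psi [_ hind]]].
have hM0 : (0 < M)%N by apply: leq_trans hM.
have hN0 : (0 < N)%N by apply: leq_trans hN.
pose x0 : 'I_M := Ordinal hM0. pose x1 : 'I_M := Ordinal hM.
pose a0 : 'I_N := Ordinal hN0. pose a1 : 'I_N := Ordinal hN.
have x01 : (x1 == x0) = false by [].
pose g (i j : 'I_N) : {ffun 'I_M -> 'I_N} :=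
  [ffun x => if x == x0 then i else if x == x1 then j else a0].
have key : forall p q, oracle C (g a0 a0) p q + oracle C (g a1 a1) p q
   - oracle C (g a0 a1) p q - oracle C (g a1 a0) p q = 0.
  move=> p q; rewrite /oracle !ffunE.
  have e1 : forall A B : C, A + B - A - B = 0.
    by move=> A B; rewrite addrAC addrK subrr.
  have e2 : forall A B : C, A + B - B - A = 0.
    by move=> A B; rewrite addrK subrr.
  case: (q.1 =P x0) => [->|_]; first exact: e1.
  case: (q.1 =P x1) => _; first exact: e2.
  exact: e1.
have pick : forall (h : {ffun 'I_M -> 'I_N}) (w : {ffun 'I_M -> 'I_N} -> C),
    \sum_f (f == h)%:R * w f = w h.
  move=> h w; rewrite (bigD1 h) //= eqxx mul1r big1 ?addr0 //.
  by move=> f /negbTE ->; rewrite mul0r.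
pose c (f : {ffun 'I_M -> 'I_N}) : C := (f == g a0 a0)%:R + (f == g a1 a1)%:R
   - (f == g a0 a1)%:R - (f == g a1 a0)%:R.
have a01 : (a0 == a1) = false by [].
have ne : forall i j i' j', (i == i') = false -> g i j != g i' j'.
  move=> i j i' j' hi; apply/eqP => /(congr1 (fun f : {ffun 'I_M -> 'I_N} => f x0)).
  by rewrite !ffunE eqxx => /eqP; rewrite hi.
have := hind c _ (g a0 a0).
rewrite /c eqxx (negbTE (ne _ _ _ _ a01)) (negbTE (ne _ _ _ _ a01)).
have ne2 : g a0 a0 != g a0 a1.
  apply/eqP => /(congr1 (fun f : {ffun 'I_M -> 'I_N} => f x1)).
  by rewrite !ffunE x01 eqxx => /eqP; rewrite a01.
rewrite (negbTE ne2) !subr0 addr0.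
move=> H; move: (oner_neq0 C) => /eqP; apply; apply: H.
move=> t.
under eq_bigr => f _ do rewrite !mulrBl !mulrDl.
rewrite !sumrB big_split /= !pick /apply_tensor_id.
rewrite -big_split -!sumrB /=; apply: big1 => s _.
by rewrite -mulrDl -!mulrBl key mul0r.
Qed.
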